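(* Let $\mathbb{F}$ be a field with $\operatorname{char}\mathbb{F}\ne 2,3$, let $2\le m,n<\infty$, and let $P$ be an $n\times m$ matrix over $\mathbb{F}$ with $\operatorname{rank}P=r\ge 2$. Then the Munn algebra $\mathcal{A}=\mathfrak{M}(\mathbb{F}, m, n, P)$ is zero Jordan product determined.
   Context: $\mathfrak{M}(\mathbb{F}, m, n, P)$ is the $\mathbb{F}$-algebra of all $m\times n$ matrices over $\mathbb{F}$ with entrywise addition and scalar multiplication and product $A\bullet B=APB$. The Jordan product is $x\circ y = x\bullet y + y\bullet x$. An associative $\mathbb{F}$-algebra $\mathcal{A}$ is zero Jordan product determined if for every bilinear functional $\phi:\mathcal{A}\times\mathcal{A}\to\mathbb{F}$ such that $x\circ y=0$ implies $\phi(x,y)=0$ for all $x,y\in\mathcal{A}$, there exists a linear functional $\tau$ on $\mathcal{A}$ with $\phi(x,y)=\tau(x\circ y)$ for all $x,y\in\mathcal{A}$. *)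

(* Defs.v *)
From mathcomp Require Import all_boot all_order all_algebra.
Set Implicit Arguments. Unset Strict Implicit. Unset Printing Implicit Defensive.
Import GRing.Theory.
Local Open Scope ring_scope.

Definition munn_mul (F : fieldType) (m n : nat) (P : 'M[F]_(n, m))
  (A B : 'M[F]_(m, n)) : 'M[F]_(m, n) := A *m P *m B.

Definition munn_jordan (F : fieldType) (m n : nat) (P : 'M[F]_(n, m))
  (A B : 'M[F]_(m, n)) : 'M[F]_(m, n) := munn_mul P A B + munn_mul P B A.

Definition bilinear_functional (F : fieldType) (V : lmodType F)
  (phi : V -> V -> F) : Prop :=
  (forall (a : F) (x1 x2 y : V), phi (a *: x1 + x2) y = a * phi x1 y + phi x2 y) /\
  (forall (a : F) (x y1 y2 : V), phi x (a *: y1 + y2) = a * phi x y1 + phi x y2).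

Definition linear_functional (F : fieldType) (V : lmodType F)
  (tau : V -> F) : Prop :=
  forall (a : F) (x y : V), tau (a *: x + y) = a * tau x + tau y.

Definition munn_zero_jordan_product_determined (F : fieldType) (m n : nat)
  (P : 'M[F]_(n, m)) : Prop :=
  forall phi : 'M[F]_(m, n) -> 'M[F]_(m, n) -> F,
    bilinear_functional phi ->
    (forall x y, munn_jordan P x y = 0 -> phi x y = 0) ->
    exists tau : 'M[F]_(m, n) -> F,
      linear_functional tau /\ forall x y, phi x y = tau (munn_jordan P x y).

(* Main.v *)
Require Import Defs.
From mathcomp Require Import all_boot all_order all_algebra.
From mathcomp Require Import ring zify.
Set Implicit Arguments. Unset Strict Implicit. Unset Printing Implicit Defensive.
Import GRing.Theory.
Local Open Scope ring_scope.

Lemma natr_andb (F : fieldType) (a b : bool) : ((a && b)%:R : F) = a%:R * b%:R.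
Proof. by case: a; case: b; rewrite ?mul1r ?mul0r. Qed.

Lemma sum_ord_eq (F : fieldType) (k b : nat) (f : nat -> F) :
  \sum_(i < k) ((i == b :> nat)%:R * f i) = (b < k)%:R * f b.
Proof.
elim: k => [|k IH]; first by rewrite big_ord0 ltn0 mul0r.
rewrite big_ord_recr /= IH.
have [h|h|->] := ltngtP b k.
- by rewrite ltnS (ltnW h) /=; ring.
- by rewrite ltnS leqNgt h /=; ring.
- by rewrite ltnSn /=; ring.
Qed.

Section Bil.
Variables (F : fieldType) (m n : nat).
Variable beta : 'M[F]_(m, n) -> 'M[F]_(m, n) -> F.
Hypothesis hb : bilinear_functional beta.

Lemma bDl x1 x2 y : beta (x1 + x2) y = beta x1 y + beta x2 y.
Proof. by case: hb => h _; rewrite -{1}[x1]scale1r h mul1r. Qed.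
Lemma b0l y : beta 0 y = 0.
Proof. have h := bDl 0 0 y; rewrite addr0 in h.
by apply: (@addrI _ (beta 0 y)); rewrite addr0 -h. Qed.
Lemma bZl a x y : beta (a *: x) y = a * beta x y.
Proof. by case: hb => h _; rewrite -[a *: x]addr0 h b0l addr0. Qed.
Lemma bDr x y1 y2 : beta x (y1 + y2) = beta x y1 + beta x y2.
Proof. by case: hb => _ h; rewrite -{1}[y1]scale1r h mul1r. Qed.
Lemma b0r x : beta x 0 = 0.
Proof. have h := bDr x 0 0; rewrite addr0 in h.
by apply: (@addrI _ (beta x 0)); rewrite addr0 -h. Qed.
Lemma bZr a x y : beta x (a *: y) = a * beta x y.
Proof. by case: hb => _ h; rewrite -[a *: y]addr0 h b0r addr0. Qed.

Lemma bsuml k (f : 'I_k -> 'M[F]_(m, n)) y :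
  beta (\sum_(i < k) f i) y = \sum_(i < k) beta (f i) y.
Proof.
apply: (big_rec2 (fun a b => beta a y = b)); first exact: b0l.
by move=> i a b _ <-; rewrite bDl.
Qed.
Lemma bsumr k (f : 'I_k -> 'M[F]_(m, n)) x :
  beta x (\sum_(i < k) f i) = \sum_(i < k) beta x (f i).
Proof.
apply: (big_rec2 (fun a b => beta x a = b)); first exact: b0r.
by move=> i a b _ <-; rewrite bDr.
Qed.

Lemma bil_expand x y : beta x y = \sum_(i < m) \sum_(j < n) \sum_(k < m) \sum_(l < n)
  (x i j * y k l * beta (delta_mx i j) (delta_mx k l)).
Proof.
rewrite {1}(matrix_sum_delta x) bsuml; apply: eq_bigr => i _.
rewrite bsuml; apply: eq_bigr => j _.
rewrite bZl {1}(matrix_sum_delta y) bsumr mulr_sumr; apply: eq_bigr => k _.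
rewrite bsumr mulr_sumr; apply: eq_bigr => l _.
by rewrite bZr mulrA.
Qed.
End Bil.

Lemma bil_ext (F : fieldType) m n (b1 b2 : 'M[F]_(m, n) -> 'M[F]_(m, n) -> F) :
  bilinear_functional b1 -> bilinear_functional b2 ->
  (forall i j k l, b1 (delta_mx i j) (delta_mx k l) = b2 (delta_mx i j) (delta_mx k l)) ->
  forall x y, b1 x y = b2 x y.
Proof.
move=> h1 h2 e x y; rewrite (bil_expand h1) (bil_expand h2).
do 4! (apply: eq_bigr => ? _). by rewrite e.
Qed.

Section Core.
Variables (F : fieldType) (m n r : nat).
Hypotheses (r2 : (2 <= r)%N) (rn : (r <= n)%N) (rm : (r <= m)%N).

Definition Q : 'M[F]_(n, m) := \matrix_(i, j) ((i == j :> nat)%:R * (i < r)%N%:R).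
Definition E (a b : nat) : 'M[F]_(m, n) := \matrix_(i, j) ((i == a :> nat)%:R * (j == b :> nat)%:R).

Lemma EQ_entry a b (x : 'I_m) (j : 'I_m) :
  (E a b *m Q) x j = (x == a :> nat)%:R * ((b < n)%N%:R * ((b == j :> nat)%:R * (b < r)%N%:R)).
Proof.
rewrite !mxE.
have e : forall l : 'I_n, E a b x l * Q l j = (l == b :> nat)%:R * ((x == a :> nat)%:R * ((l == j :> nat)%:R * (l < r)%N%:R)).
  by move=> l; rewrite !mxE; ring.
under eq_bigr => l _ do rewrite e.
by rewrite (sum_ord_eq n b (fun l => (x == a :> nat)%:R * ((l == j :> nat)%:R * (l < r)%N%:R))); ring.
Qed.

Lemma EQE a b c d : E a b *m Q *m E c d = ((b == c) && (b < r)%N)%:R *: E a d.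
Proof.
apply/matrixP => x y; rewrite !mxE.
have e : forall j : 'I_m, (E a b *m Q) x j * E c d j y = (j == c :> nat)%:R * ((b < n)%N%:R * ((x == a :> nat)%:R * ((b == j)%:R * (b < r)%N%:R)) * (y == d :> nat)%:R).
  by move=> j; rewrite EQ_entry !mxE; ring.
under eq_bigr => j _ do rewrite e.
rewrite (sum_ord_eq m c (fun j => (b < n)%N%:R * ((x == a :> nat)%:R * ((b == j)%:R * (b < r)%N%:R)) * (y == d :> nat)%:R)) natr_andb.
case: (ltnP b r) => br; last by rewrite /=; ring.
rewrite (leq_trans br rn); case: (b =P c) => [<-|_]; rewrite ?(leq_trans br rm) /=; ring.
Qed.

Local Notation J := (munn_jordan Q).

Lemma JE a b c d : J (E a b) (E c d) =
  ((b == c) && (b < r)%N)%:R *: E a d + ((d == a) && (a < r)%N)%:R *: E c b.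
Proof. by rewrite /munn_jordan /munn_mul !EQE; case: (d =P a) => [->|]. Qed.

Lemma JDl x1 x2 y : J (x1 + x2) y = J x1 y + J x2 y.
Proof. by rewrite /munn_jordan /munn_mul !mulmxDl !mulmxDr addrACA. Qed.
Lemma JNl x y : J (- x) y = - J x y.
Proof. by rewrite /munn_jordan /munn_mul !mulNmx !mulmxN opprD. Qed.
Lemma JZl a x y : J (a *: x) y = a *: J x y.
Proof. by rewrite /munn_jordan /munn_mul -!scalemxAl -!scalemxAr scalerDr. Qed.
Lemma JC x y : J x y = J y x.
Proof. by rewrite /munn_jordan addrC. Qed.
Lemma JDr x y1 y2 : J x (y1 + y2) = J x y1 + J x y2.
Proof. by rewrite JC JDl !(JC x). Qed.
Lemma JNr x y : J x (- y) = - J x y.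
Proof. by rewrite JC JNl JC. Qed.
Lemma JZr a x y : J x (a *: y) = a *: J x y.
Proof. by rewrite JC JZl JC. Qed.

Ltac mxring := rewrite ?scale0r ?scale1r; apply/matrixP => ? ?; rewrite !mxE /=; ring.

Variable phi : 'M[F]_(m, n) -> 'M[F]_(m, n) -> F.
Hypothesis hb : bilinear_functional phi.
Hypothesis hz : forall x y, J x y = 0 -> phi x y = 0.

Lemma phiDl x1 x2 y : phi (x1 + x2) y = phi x1 y + phi x2 y.
Proof. by case: hb => h _; rewrite -{1}[x1]scale1r h mul1r. Qed.
Lemma phi0l y : phi 0 y = 0.
Proof. have h := phiDl 0 0 y; rewrite addr0 in h.
by apply: (@addrI _ (phi 0 y)); rewrite addr0 -h. Qed.
Lemma phiZl a x y : phi (a *: x) y = a * phi x y.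
Proof. by case: hb => h _; rewrite -[a *: x]addr0 h phi0l addr0. Qed.
Lemma phiNl x y : phi (- x) y = - phi x y.
Proof. by rewrite -scaleN1r phiZl mulN1r. Qed.
Lemma phiBl x1 x2 y : phi (x1 - x2) y = phi x1 y - phi x2 y.
Proof. by rewrite phiDl phiNl. Qed.
Lemma phiDr x y1 y2 : phi x (y1 + y2) = phi x y1 + phi x y2.
Proof. by case: hb => _ h; rewrite -{1}[y1]scale1r h mul1r. Qed.
Lemma phi0r x : phi x 0 = 0.
Proof. have h := phiDr x 0 0; rewrite addr0 in h.
by apply: (@addrI _ (phi x 0)); rewrite addr0 -h. Qed.
Lemma phiZr a x y : phi x (a *: y) = a * phi x y.
Proof. by case: hb => _ h; rewrite -[a *: y]addr0 h phi0r addr0. Qed.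
Lemma phiNr x y : phi x (- y) = - phi x y.
Proof. by rewrite -scaleN1r phiZr mulN1r. Qed.
Lemma phiBr x y1 y2 : phi x (y1 - y2) = phi x y1 - phi x y2.
Proof. by rewrite phiDr phiNr. Qed.

Lemma Z a b c d : ((b == c) && (b < r)%N) = false -> ((d == a) && (a < r)%N) = false ->
  phi (E a b) (E c d) = 0.
Proof. by move=> h1 h2; apply: hz; rewrite JE h1 h2 !scale0r addr0. Qed.

Lemma S1 x y : J x x = 0 -> J y y = 0 -> phi x y = phi y x.
Proof.
move=> hx hy.
have h : phi (x + y) (y - x) = 0.
  by apply: hz; rewrite JDl !JDr !JNr hx hy (JC y x) oppr0 addr0 add0r subrr.
move: h; rewrite phiDl !phiBr (hz hx) (hz hy) subr0 add0r => /eqP.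
by rewrite subr_eq0 => /eqP.
Qed.

Lemma SZ a b : a != b -> J (E a b) (E a b) = 0.
Proof. by rewrite eq_sym => /negbTE h; rewrite JE h /= !scale0r addr0. Qed.

Lemma F1 i p q l : (p < r)%N -> (q < r)%N -> ~~ ((l == i) && (i < r)%N) ->
  phi (E i p) (E p l) = phi (E i q) (E q l).
Proof.
move=> pr qr /negbTE H; have [<-//|/negbTE pq] := eqVneq p q.
have qp : (q == p) = false by rewrite eq_sym.
have Z1 : phi (E i p) (E q l) = 0 by apply: Z; rewrite ?pq.
have Z2 : phi (E i q) (E p l) = 0 by apply: Z; rewrite ?qp.
have h : phi (E i p + E i q) (E p l - E q l) = 0.
  by apply: hz; rewrite !(JDl, JDr, JNl, JNr) !JE H pq qp !eqxx pr qr /=; mxring.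
move: h; rewrite phiDl !phiBr Z1 Z2 subr0 sub0r => /eqP.
by rewrite subr_eq0 => /eqP.
Qed.

Lemma F1' j k p q : (p < r)%N -> (q < r)%N -> ~~ ((j == k) && (j < r)%N) ->
  phi (E p j) (E k p) = phi (E q j) (E k q).
Proof.
move=> pr qr /negbTE H; have [<-//|/negbTE pq] := eqVneq p q.
have qp : (q == p) = false by rewrite eq_sym.
have Z1 : phi (E p j) (E k q) = 0 by apply: Z; rewrite ?qp.
have Z2 : phi (E q j) (E k p) = 0 by apply: Z; rewrite ?pq.
have h : phi (E p j - E q j) (E k p + E k q) = 0.
  by apply: hz; rewrite !(JDl, JDr, JNl, JNr) !JE H pq qp !eqxx pr qr /=; mxring.
move: h; rewrite phiBl !phiDr Z1 Z2 addr0 add0r => /eqP.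
by rewrite subr_eq0 => /eqP.
Qed.


Hypothesis two : (2%:R : F) != 0.

Lemma r0 : (0 < r)%N.
Proof. exact: leq_trans r2. Qed.

Lemma condsym j k : ~~((j == k) && (j < r)%N) -> ~~((j == k) && (k < r)%N).
Proof. by case: (j =P k) => [->|]. Qed.

Lemma UVp p j k : (p < r)%N -> p != j -> p != k -> ~~((j == k) && (j < r)%N) ->
  phi (E 0 j) (E k 0) = phi (E k 0) (E 0 j).
Proof.
move=> pr pj pk H; rewrite eq_sym in pk.
by rewrite (F1' r0 pr H) (S1 (SZ pj) (SZ pk)) (F1 pr r0 (condsym H)).
Qed.

Lemma lin2 (U V X W : F) : U + X - W - V = V + X - W - U -> U = V.
Proof.
move=> h; apply: (mulIf two); apply/eqP; rewrite -subr_eq0; apply/eqP.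
transitivity ((U + X - W - V) - (V + X - W - U)); first by ring.
by rewrite h subrr.
Qed.

Lemma from0 (a b c : F) : c = 0 -> b - a = c -> a = b.
Proof. by move=> -> /eqP; rewrite subr_eq0 => /eqP. Qed.

Lemma UVg j k : (j < r)%N -> (k < r)%N -> j != k ->
  phi (E 0 j) (E k 0) = phi (E k 0) (E 0 j).
Proof.
move=> jr kr jk; have jk' := negbTE jk; have kj' : (k == j) = false by rewrite eq_sym.
have kj : k != j by rewrite kj'.
have H : ~~((j == k) && (j < r)%N) by rewrite jk'.
have H' : ~~((j == k) && (k < r)%N) by rewrite jk'.
have hs : J (E j j + E j k - E k j - E k k) (E j j + E j k - E k j - E k k) = 0.
  by rewrite !(JDl, JDr, JNl, JNr) !JE jk' kj' !eqxx jr kr /=; mxring.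
have := S1 hs (SZ kj).
rewrite !(phiDl, phiNl, phiDr, phiNr).
rewrite (F1' jr r0 H) (F1' kr r0 H) (F1 kr r0 H') (F1 jr r0 H') (S1 (SZ jk) (SZ kj)).
exact: lin2.
Qed.

Lemma pick j k : ~~((j < r)%N && (k < r)%N) -> exists p, [/\ (p < r)%N, p != j & p != k].
Proof.
move=> H; case: (boolP (j == 0%N)) => j0.
  exists 1%N; move: H j0; case: (ltnP j r); case: (ltnP k r) => //= *; split; lia.
case: (boolP (k == 0%N)) => k0.
  exists 1%N; move: H j0 k0; case: (ltnP j r); case: (ltnP k r) => //= *; split; lia.
by exists 0%N; split; rewrite 1?eq_sym //; apply: leq_trans r2.
Qed.

Lemma UV j k : ~~((j == k) && (j < r)%N) -> phi (E 0 j) (E k 0) = phi (E k 0) (E 0 j).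
Proof.
move=> H; case: (boolP ((j < r)%N && (k < r)%N)) => [/andP[jr kr]|hh].
  by apply: UVg => //; move: H; rewrite jr andbT.
by have [p [pr pj pk]] := pick hh; exact: (UVp pr pj pk H).
Qed.

Lemma IV i j : (i < r)%N -> (j < r)%N -> i != j ->
  phi (E i j) (E j i) * 2%:R = phi (E i i) (E i i) + phi (E j j) (E j j).
Proof.
move=> ir jr ij; have ij' := negbTE ij; have ji' : (j == i) = false by rewrite eq_sym.
have ji : j != i by rewrite ji'.
have h : phi (E i i + E i j + E j i + E j j) (E i i - E i j - E j i + E j j) = 0.
  by apply: hz; rewrite !(JDl, JDr, JNl, JNr) !JE ij' ji' !eqxx ir jr /=; mxring.
have z1 : phi (E i i) (E j j) = 0 by apply: Z; rewrite ?ij' ?ji'.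
have z2 : phi (E i j) (E i j) = 0 by apply: Z; rewrite ?ij' ?ji'.
have z3 : phi (E j i) (E j i) = 0 by apply: Z; rewrite ?ij' ?ji'.
have z4 : phi (E j j) (E i i) = 0 by apply: Z; rewrite ?ij' ?ji'.
have H1 : ~~((j == i) && (i < r)%N) by rewrite ji'.
have H2 : ~~((i == j) && (j < r)%N) by rewrite ij'.
have H3 : ~~((j == i) && (j < r)%N) by rewrite ji'.
have H4 : ~~((i == j) && (i < r)%N) by rewrite ij'.
move: h; rewrite !(phiDl, phiNl, phiDr, phiNr) z1 z2 z3 z4.
rewrite (F1 ir jr H1) (F1 ir jr H2) (F1' ir jr H3) (F1' jr ir H4) (S1 (SZ ji) (SZ ij)).
by move=> h; apply: (from0 h); ring.
Qed.


Definition t a b := if (a == b) && (a < r)%N then phi (E a a) (E a a) / 2%:R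
  else phi (E a 0) (E 0 b).
Definition tau (X : 'M[F]_(m, n)) := \sum_(i < m) \sum_(j < n) X i j * t i j.

Lemma tau_lin : linear_functional tau.
Proof.
move=> a x y; rewrite /tau mulr_sumr -big_split; apply: eq_bigr => i _.
rewrite mulr_sumr -big_split; apply: eq_bigr => j _; by rewrite !mxE /= mulrDl mulrA.
Qed.
Lemma tauD x y : tau (x + y) = tau x + tau y.
Proof.
rewrite /tau -big_split; apply: eq_bigr => i _.
rewrite -big_split; apply: eq_bigr => j _; by rewrite !mxE /= mulrDl.
Qed.
Lemma tauZ a x : tau (a *: x) = a * tau x.
Proof.
rewrite /tau mulr_sumr; apply: eq_bigr => i _.
rewrite mulr_sumr; apply: eq_bigr => j _; by rewrite !mxE mulrA.
Qed.

Lemma tauE (a : 'I_m) (b : 'I_n) : tau (E a b) = t a b.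
Proof.
rewrite /tau.
have e1 : forall i : 'I_m, \sum_(j < n) E a b i j * t i j = (i == a :> nat)%:R * t i b.
  move=> i; have e2 : forall j : 'I_n, E a b i j * t i j = (j == b :> nat)%:R * ((i == a :> nat)%:R * t i j).
    by move=> j; rewrite !mxE; ring.
  under eq_bigr => j _ do rewrite e2.
  by rewrite (sum_ord_eq n b (fun j => (i == a :> nat)%:R * t i j)) ltn_ord mul1r.
under eq_bigr => i _ do rewrite e1.
by rewrite (sum_ord_eq m a (fun i => t i b)) ltn_ord mul1r.
Qed.

Lemma basis a b c d : phi (E a b) (E c d) =
  ((b == c) && (b < r)%N)%:R * t a d + ((d == a) && (a < r)%N)%:R * t c b.
Proof.
case h1: ((b == c) && (b < r)%N); case h2: ((d == a) && (a < r)%N).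
- move: h1 h2 => /andP[/eqP<- br] /andP[/eqP-> ar].
  rewrite /t !eqxx ar br /= !mul1r; case: (a =P b) => [<-|/eqP ab].
    by rewrite -mulrDl -mulr2n -[phi _ _ *+ 2]mulr_natr mulfK.
  by rewrite -mulrDl -(IV ar br ab) mulfK.
- move: h1 => /andP[/eqP<- br]; rewrite mul1r mul0r addr0 /t eq_sym h2.
  exact: (F1 br r0 (negbT h2)).
- move: h2 => /andP[/eqP-> ar]; rewrite mul1r mul0r add0r /t.
  have h1' : ((c == b) && (c < r)%N) = false.
    by rewrite eq_sym; apply/negbTE/condsym/negbT.
  by rewrite h1' (F1' ar r0 (negbT h1)) (UV (negbT h1)).
- by rewrite !mul0r addr0; apply: Z.
Qed.

Lemma deltaE (i : 'I_m) (j : 'I_n) : delta_mx i j = E i j.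
Proof. by apply/matrixP => x y; rewrite !mxE natr_andb. Qed.

Lemma main_rep x y : phi x y = tau (J x y).
Proof.
apply: (bil_ext (b2 := fun x y => tau (J x y))) => //.
  by split=> [a x1 x2 y0|a x0 y1 y2]; rewrite ?JDl ?JDr ?JZl ?JZr tauD tauZ.
move=> i j k l; rewrite !deltaE basis JE tauD !tauZ !tauE.
done.
Qed.

End Core.

Lemma core (F : fieldType) (m n r : nat) : (2 <= r)%N -> (r <= n)%N -> (r <= m)%N ->
  (2%:R : F) != 0 -> munn_zero_jordan_product_determined (Q F m n r).
Proof.
move=> r2 rn rm two phi hb hz.
exists (@tau F m n r phi); split; first exact: tau_lin.
by move=> x y; apply: main_rep.
Qed.

Lemma transport (F : fieldType) m n (Q0 : 'M[F]_(n, m)) (L : 'M[F]_n) (U : 'M[F]_m) :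
  L \in unitmx -> U \in unitmx -> munn_zero_jordan_product_determined Q0 ->
  munn_zero_jordan_product_determined (L *m Q0 *m U).
Proof.
move=> uL uU hQ phi hb hz.
pose f (X : 'M[F]_(m, n)) := invmx U *m X *m invmx L.
pose g (X : 'M[F]_(m, n)) := U *m X *m L.
have fg X : f (g X) = X by rewrite /f /g !mulmxA mulmxK // mulVmx // mul1mx.
have gf X : g (f X) = X by rewrite /f /g !mulmxA mulmxKV // mulmxV // mul1mx.
have gJ x y : g (munn_jordan (L *m Q0 *m U) x y) = munn_jordan Q0 (g x) (g y).
  by rewrite /g /munn_jordan /munn_mul mulmxDr mulmxDl !mulmxA.
have fL a x1 x2 : f (a *: x1 + x2) = a *: f x1 + f x2.
  by rewrite /f mulmxDr mulmxDl -scalemxAr -scalemxAl.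
have gL a x1 x2 : g (a *: x1 + x2) = a *: g x1 + g x2.
  by rewrite /g mulmxDr mulmxDl -scalemxAr -scalemxAl.
have hb' : bilinear_functional (fun X Y => phi (f X) (f Y)).
  by case: hb => h1 h2; split=> a x1 x2 y; rewrite fL ?h1 ?h2.
have hz' X Y : munn_jordan Q0 X Y = 0 -> phi (f X) (f Y) = 0.
  move=> h; apply: hz.
  have e : g (munn_jordan (L *m Q0 *m U) (f X) (f Y)) = 0 by rewrite gJ !gf.
  by rewrite -[munn_jordan _ _ _]fg e /f mulmx0 mul0mx.
have [tau' [tl te]] := hQ _ hb' hz'.
exists (fun z => tau' (g z)); split.
  by move=> a x y; rewrite gL tl.
by move=> x y; rewrite -{1}[x]fg -{1}[y]fg te gJ.
Qed.

Unset Implicit Arguments.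

Theorem theorem3p5 (F : fieldType) (m n : nat) (P : 'M[F]_(n, m)) :
  ~~ (2%N \in [pchar F]) -> ~~ (3%N \in [pchar F]) ->
  (2 <= m)%N -> (2 <= n)%N -> (2 <= \rank P)%N ->
  munn_zero_jordan_product_determined P.
Proof.
move=> h2 _ _ _ hr.
have two : (2%:R : F) != 0 by move: h2; rewrite inE.
rewrite -(mulmx_ebase P); apply: transport; rewrite ?col_ebase_unit ?row_ebase_unit //.
have -> : pid_mx (\rank P) = Q F m n (\rank P).
  by apply/matrixP => x y; rewrite !mxE natr_andb.
by apply: core => //; [exact: rank_leq_row | exact: rank_leq_col].
Qed.
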